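(* For all integers $n$ and $d$ with $3\leq d<\left\lceil\frac{n}{2}\right\rceil$, $$t(n,d)\leq n-2+\left\lceil\frac{n}{d-1}\right\rceil.$$
   Context: All graphs are finite, simple and undirected. In an edge-colored graph (adjacent edges may receive the same color), a path is a rainbow path if no two of its edges have the same color. A graph $G$ is $d$-rainbow connected if there is an edge-coloring of $G$ using $d$ colors such that every two distinct vertices of $G$ are joined by a rainbow path. For positive integers $n$ and $d$, $t(n,d)$ denotes the minimum number of edges of a $d$-rainbow connected graph on $n$ vertices. *)

(* Defs.v *)
From mathcomp Require Import all_boot.
From Stdlib Require Import ClassicalEpsilon.
Set Implicit Arguments. Unset Strict Implicit. Unset Printing Implicit Defensive.

Definition simple_graph (n : nat) (E : {set {set 'I_n}}) : Prop :=
  forall e, e \in E -> #|e| = 2.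

(* An edge-colouring with d colours: a colour in 'I_d for every pair
   (only its values on edges matter; adjacent edges may share colours). *)

(* p : seq 'I_n describes the vertex sequence u :: p; it is a path of E from
   u to v (no repeated vertices) whose edges have pairwise distinct colours. *)
Definition rainbow_path (n d : nat) (E : {set {set 'I_n}})
    (c : {set 'I_n} -> 'I_d) (u v : 'I_n) (p : seq 'I_n) : Prop :=
  [/\ path (fun x y => [set x; y] \in E) u p,
      last u p = v,
      uniq (u :: p) &
      uniq (map c (pairmap (fun x y => [set x; y]) u p))].

Definition rainbow_connected (n d : nat) (E : {set {set 'I_n}}) : Prop :=
  exists c : {set 'I_n} -> 'I_d,
    forall u v : 'I_n, u != v -> exists p, rainbow_path E c u v p.

Definition has_rc_graph (n d m : nat) : bool :=
  if excluded_middle_informative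
       (exists E : {set {set 'I_n}},
          [/\ simple_graph E, #|E| = m & rainbow_connected d E])
  then true else false.

(* t(n,d): minimum number of edges of a d-rainbow connected graph on n
   vertices (defaults to 0 when no such graph exists, e.g. d = 0, n >= 2). *)
Definition t (n d : nat) : nat :=
  match excluded_middle_informative (exists m, has_rc_graph n d m) with
  | left H => ex_minn H
  | right _ => 0
  end.

(* Main.v *)
Require Import Defs.
From mathcomp Require Import all_boot zify.
From Stdlib Require Import ClassicalEpsilon.
Set Implicit Arguments. Unset Strict Implicit. Unset Printing Implicit Defensive.

Section Cons.
Variables D N : nat.
Hypothesis hD : 1 < D.

Definition kk := N %/ D.
Definition KK := kk * D.
Lemma KN : KK <= N.
Proof. by rewrite /KK /kk leq_divM. Qed.

Definition predv (v : nat) := if (v <= KK) && (v.-1 %% D != 0) then v.-1 else 0.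
Local Notation V := 'I_N.+1.

Definition E : {set {set V}} :=
  [set [set inord (predv (val v)); v] | v : V in [set v : V | v != ord0]] :|:
  [set [set ord0; inord ((val q).+1 * D)] | q : 'I_kk].

Definition colf (M : nat) (z : bool) := if z && (M.-1 %% D == D.-1) then D else M.-1 %% D.

Definition c (e : {set V}) : 'I_D.+1 := inord (colf (\max_(x in e) val x) (ord0 \in e)).

Definition adjN (a b : nat) := [set (inord a : V); inord b] \in E.
Definition colN (a b : nat) := val (c [set (inord a : V); inord b]).

Lemma adj_sym a b : adjN a b = adjN b a.
Proof. by rewrite /adjN setUC. Qed.
Lemma col_sym a b : colN a b = colN b a.
Proof. by rewrite /colN setUC. Qed.

Lemma inord0 : (inord 0 : V) = ord0.
Proof. by apply: val_inj; rewrite /= inordK. Qed.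

Lemma adj_pred v : 0 < v <= N -> adjN (predv v) v.
Proof.
move=> /andP[v0 vN]; rewrite /adjN /E; apply/setUP; left.
have -> : (inord (predv v) : V) = inord (predv (val (inord v : V))) by rewrite /= inordK...
apply: imset_f; rewrite inE; apply/eqP => /(congr1 val); rewrite /= inordK //; lia.
Qed.

Lemma edge_up m : 1 <= m -> m.+1 <= KK -> m %% D != 0 -> adjN m m.+1.
Proof.
move=> h1 h2 h3; have := KN => hK.
rewrite {1}(_ : m = predv m.+1); last by rewrite /predv h2 h3.
by apply: adj_pred; lia.
Qed.

Lemma edge_start b : b %% D = 0 -> b + D <= KK -> adjN 0 b.+1.
Proof.
move=> h1 h2; have := KN => hK.
have -> : 0 = predv b.+1.
  rewrite /predv /=. rewrite h1 eqxx andbF //.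
by apply: adj_pred; lia.
Qed.

Lemma edge_close b : b %% D = 0 -> b + D <= KK -> adjN 0 (b + D).
Proof.
move=> h1 h2; rewrite /adjN inord0 /E; apply/setUP; right.
have hq : b %/ D < kk.
  rewrite -(ltn_pmul2r (ltnW hD)) -/KK. rewrite divnK; first by lia.
  by apply/dvdnP; exists (b %/ D); rewrite {1}(divn_eq b D) h1 addn0.
have -> : b + D = (Ordinal hq).+1 * D.
  by rewrite /= mulSn addnC divnK //; apply/eqnP.
exact: imset_f.
Qed.

Lemma edge_left v : KK < v <= N -> adjN 0 v.
Proof.
move=> h; have -> : 0 = predv v by rewrite /predv leqNgt; case/andP: h => -> .
apply: adj_pred; lia.
Qed.
End Cons.
Section Col.
Variables D N : nat.
Hypothesis hD : 1 < D.
Local Notation V := 'I_N.+1.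
Local Notation colN := (colN D N).

Lemma max2 (x y : V) : x != y -> \max_(z in [set x; y]) val z = maxn x y.
Proof.
move=> xy; rewrite big_setU1 ?inE // big_set1 //.
Qed.

Lemma colNE a b : a != b -> a <= N -> b <= N ->
  colN a b = colf D (maxn a b) ((a == 0) || (b == 0)).
Proof.
move=> ab aN bN; rewrite /colN /c max2; last first.
  by apply: contra ab => /eqP/(congr1 val) /=; rewrite !inordK // => ->.
have e0 x : x <= N -> (ord0 == inord x :> V) = (x == 0).
  by move=> xN; rewrite -(inj_eq val_inj) /= inordK // eq_sym.
rewrite !inE e0 // e0 // /= !(inordK (n' := N)) // (inordK (n' := D)) //.
rewrite /colf; case: ifP => _ //.
have : (maxn a b).-1 %% D < D by rewrite ltn_mod; lia.
lia.
Qed.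
End Col.
Section Main.
Variables D N : nat.
Hypothesis hD : 1 < D.
Local Notation colN := (colN D N).
Local Notation adjN := (adjN D N).
Local Notation K := (KK D N).
Local Notation k := (kk D N).

Lemma modb b i : b %% D = 0 -> (b + i) %% D = i %% D.
Proof. by move=> h; rewrite -modnDml h add0n. Qed.

Lemma col_run m : 1 <= m -> m.+1 <= N -> colN m m.+1 = m %% D.
Proof.
move=> h1 h2; rewrite colNE; try lia.
rewrite /colf. have -> : (m == 0) || (m.+1 == 0) = false by lia.
have -> : maxn m m.+1 = m.+1 by lia.
by [].
Qed.

Lemma col_start b : b %% D = 0 -> b.+1 <= N -> colN 0 b.+1 = 0.
Proof.
move=> h1 h2; rewrite colNE; try lia.
rewrite /colf /= h1. by have -> : (0 == D.-1) = false by lia.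
Qed.

Lemma col_close b : b %% D = 0 -> b + D <= N -> colN 0 (b + D) = D.
Proof.
move=> h1 h2; rewrite colNE; try lia.
rewrite /colf /=. have -> : (maxn 0 (b + D)).-1 = b + D.-1 by lia.
rewrite modb // modn_small ?eqxx //; lia.
Qed.

Lemma col_left v : K < v <= N -> colN 0 v = v.-1 - K.
Proof.
move=> h; rewrite colNE; try lia.
have hr : N - K < D.
  rewrite /KK /kk. have := ltn_pmod N (ltnW hD). rewrite {2}(divn_eq N D). lia.
have hK : K %% D = 0 by rewrite /KK modnMl.
rewrite /colf /=.
have -> : (maxn 0 v).-1 = K + (v.-1 - K) by lia.
rewrite modb // modn_small; last by lia.
have -> : (v.-1 - K == D.-1) = false by lia.
by [].
Qed.


Definition VP x y s := [/\ path adjN x s, last x s = y, uniq (x :: s) & all (fun v => v <= N) (x :: s)].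

Lemma VP_glue x z y s1 s2 : VP x z s1 -> VP z y s2 ->
  (forall v, v \in x :: s1 -> v \in s2 -> False) -> VP x y (s1 ++ s2).
Proof.
case=> p1 l1 u1 a1 [p2 l2 u2 a2] dj; split.
- by rewrite cat_path p1 l1.
- by rewrite last_cat l1.
- have u2' : uniq s2 by case/andP: u2.
  rewrite -cat_cons cat_uniq u1 u2' andbT.
  by apply/hasPn => v vs2; apply/negP => /dj /(_ vs2).
- by rewrite -cat_cons all_cat a1; case/andP: a2.
Qed.

Lemma VP_edge a b : adjN a b -> a != b -> a <= N -> b <= N -> VP a b [:: b].
Proof. by move=> e ab aN bN; split; rewrite /= ?e ?inE ?ab ?aN ?bN. Qed.

Lemma up_run l b : 1 <= b -> b + l <= K -> (forall m, b <= m < b + l -> m %% D != 0) ->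
  VP b (b + l) (iota b.+1 l) /\ pairmap colN b (iota b.+1 l) = map (modn^~ D) (iota b l).
Proof.
have hK := KN D N.
elim: l b => [|l IH] b h1 h2 h3.
  by rewrite addn0; split => //; split; rewrite /= ?andbT //; lia.
have [V1 C1] := IH b.+1 (ltn0Sn b) (ltac:(lia)) (fun m hm => h3 m (ltac:(lia))).
split.
  have -> : b + l.+1 = b.+1 + l by lia.
  apply: (@VP_glue _ b.+1 _ [:: b.+1]) => //.
    apply: VP_edge; try lia. apply: edge_up; try lia. apply: h3; lia.
  by move=> v; rewrite !inE mem_iota; lia.
by rewrite /= C1 col_run //; lia.
Qed.

Lemma down_run l b : 1 <= b -> b + l <= K -> (forall m, b <= m < b + l -> m %% D != 0) ->
  VP (b + l) b (rev (iota b l)) /\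
  pairmap colN (b + l) (rev (iota b l)) = rev (map (modn^~ D) (iota b l)).
Proof.
have hK := KN D N.
elim: l => [|l IH] h1 h2 h3.
  by rewrite addn0; split => //; split; rewrite /= ?andbT //; lia.
have [V1 C1] := IH h1 (ltac:(lia)) (fun m hm => h3 m (ltac:(lia))).
have hz : (b + l) %% D != 0 by apply: h3; lia.
rewrite -addn1 iotaD rev_cat /= map_cat rev_cat /=.
split.
  have -> : b + (l + 1) = (b + l).+1 by lia.
  apply: (@VP_glue _ (b + l) _ [:: b + l]) => //.
    apply: VP_edge; try lia. rewrite adj_sym; apply: edge_up; lia.
  by move=> v; rewrite !inE mem_rev mem_iota; lia.
rewrite -C1.
have -> : b + (l + 1) = (b + l).+1 by lia.
by rewrite col_sym col_run //; lia.
Qed.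

Lemma mod_iota b l i : b %% D = 0 -> i + l <= D -> map (modn^~ D) (iota (b + i) l) = iota i l.
Proof.
move=> hb; elim: l i => [|l IH] i hl //=.
rewrite modb // modn_small; last by lia.
by rewrite -addnS IH //; lia.
Qed.

Lemma modnz b m : b %% D = 0 -> b < m < b + D -> m %% D != 0.
Proof.
move=> hb hm; have -> : m = b + (m - b) by lia.
rewrite modb // modn_small; lia.
Qed.

Lemma uniq_catI (s1 s2 : seq nat) : uniq s1 -> uniq s2 ->
  (forall a, a \in s1 -> a \in s2 -> False) -> uniq (s1 ++ s2).
Proof.
move=> u1 u2 dj; rewrite cat_uniq u1 u2 andbT.
by apply/hasPn => a a2; apply/negP => /dj /(_ a2).
Qed.

Definition ArmF x s (P A : pred nat) :=
  [/\ VP x 0 s, all P (x :: s), uniq (pairmap colN x s) & all A (pairmap colN x s)].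
Definition ArmT y s (P A : pred nat) :=
  [/\ VP 0 y s, all P s, uniq (pairmap colN 0 s) & all A (pairmap colN 0 s)].
Definition RP x y s := VP x y s /\ uniq (pairmap colN x s).

Lemma combine x y s1 s2 P1 A1 P2 A2 : ArmF x s1 P1 A1 -> ArmT y s2 P2 A2 ->
  (forall v, P1 v -> P2 v -> False) -> (forall a, A1 a -> A2 a -> False) ->
  exists s, RP x y s.
Proof.
case=> V1 Pa1 U1 Aa1 [V2 Pa2 U2 Aa2] dP dA; exists (s1 ++ s2); split.
  apply: VP_glue V1 V2 _ => v h1 h2.
  by apply: (dP v); [move/allP: Pa1; apply | move/allP: Pa2; apply].
have [_ l1 _ _] := V1.
rewrite pairmap_cat l1; apply: uniq_catI => // a h1 h2.
by apply: (dA a); [move/allP: Aa1; apply | move/allP: Aa2; apply].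
Qed.

Lemma arm_back b i : b %% D = 0 -> b + D <= K -> 0 < i <= D ->
  ArmF (b + i) (rev (iota b.+1 i.-1) ++ [:: 0])
       (fun v => (v == 0) || (b < v <= b + D)) (fun a => a < i).
Proof.
have hK := KN D N; move=> hb hbK hi.
have [V1 C1] := @down_run i.-1 b.+1 (ltn0Sn b) (ltac:(lia))
   (fun m hm => @modnz b m hb (ltac:(lia))).
have e : b.+1 + i.-1 = b + i by lia.
rewrite e in V1 C1.
have V2 : VP b.+1 0 [:: 0].
  by apply: VP_edge; [rewrite adj_sym; apply: edge_start | lia | lia | lia].
have m1 : map (modn^~D) (iota b.+1 i.-1) = iota 1 i.-1.
  by rewrite -(addn1 b) mod_iota //; lia.
have hcol : pairmap colN (b + i) (rev (iota b.+1 i.-1) ++ [:: 0]) = rev (iota 1 i.-1) ++ [:: 0].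
  have [_ l1 _ _] := V1.
  by rewrite pairmap_cat C1 l1 m1 /= col_sym col_start //; lia.
split.
- by apply: VP_glue V1 V2 _ => v; rewrite !inE mem_rev mem_iota; lia.
- by apply/allP => v; rewrite !inE mem_cat mem_rev mem_iota !inE; lia.
- rewrite hcol; apply: uniq_catI; rewrite ?rev_uniq ?iota_uniq // => a.
  by rewrite mem_rev mem_iota !inE; lia.
- by rewrite hcol; apply/allP => a; rewrite mem_cat mem_rev mem_iota !inE; lia.
Qed.

Lemma arm_fwd b i : b %% D = 0 -> b + D <= K -> 0 < i <= D ->
  ArmF (b + i) (iota (b + i).+1 (D - i) ++ [:: 0])
       (fun v => (v == 0) || (b < v <= b + D)) (fun a => i <= a).
Proof.
have hK := KN D N; move=> hb hbK hi.
have [V1 C1] := @up_run (D - i) (b + i) (ltac:(lia)) (ltac:(lia))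
   (fun m hm => @modnz b m hb (ltac:(lia))).
have e : b + i + (D - i) = b + D by lia.
rewrite e in V1.
have V2 : VP (b + D) 0 [:: 0].
  by apply: VP_edge; [rewrite adj_sym; apply: edge_close | lia | lia | lia].
have m1 : map (modn^~D) (iota (b + i) (D - i)) = iota i (D - i).
  by rewrite mod_iota //; lia.
have hcol : pairmap colN (b + i) (iota (b + i).+1 (D - i) ++ [:: 0]) = iota i (D - i) ++ [:: D].
  have [_ l1 _ _] := V1.
  by rewrite pairmap_cat C1 l1 m1 /= col_sym col_close //; lia.
split.
- by apply: VP_glue V1 V2 _ => v; rewrite !inE mem_iota; lia.
- by apply/allP => v; rewrite !inE mem_cat mem_iota !inE; lia.
- rewrite hcol; apply: uniq_catI; rewrite ?iota_uniq // => a.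
  by rewrite mem_iota !inE; lia.
- by rewrite hcol; apply/allP => a; rewrite mem_cat mem_iota !inE; lia.
Qed.

Lemma arm_up b j : b %% D = 0 -> b + D <= K -> 0 < j <= D ->
  ArmT (b + j) (b.+1 :: iota b.+2 j.-1) (fun v => b < v <= b + D) (fun a => a < j).
Proof.
have hK := KN D N; move=> hb hbK hj.
have [V2 C2] := @up_run j.-1 b.+1 (ltn0Sn b) (ltac:(lia))
   (fun m hm => @modnz b m hb (ltac:(lia))).
have e : b.+1 + j.-1 = b + j by lia.
rewrite e in V2.
have V1 : VP 0 b.+1 [:: b.+1].
  by apply: VP_edge; [apply: edge_start | lia | lia | lia].
have m1 : map (modn^~D) (iota b.+1 j.-1) = iota 1 j.-1.
  by rewrite -(addn1 b) mod_iota //; lia.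
have hcol : pairmap colN 0 (b.+1 :: iota b.+2 j.-1) = 0 :: iota 1 j.-1.
  by rewrite /= C2 m1 col_start //; lia.
split.
- by apply: (VP_glue V1 V2) => v; rewrite !inE mem_iota; lia.
- by apply/allP => v; rewrite !inE mem_iota; lia.
- by rewrite hcol /= iota_uniq mem_iota andbT; lia.
- by rewrite hcol; apply/allP => a; rewrite !inE mem_iota; lia.
Qed.

Lemma arm_down b j : b %% D = 0 -> b + D <= K -> 0 < j <= D ->
  ArmT (b + j) ((b + D) :: rev (iota (b + j) (D - j))) (fun v => b < v <= b + D) (fun a => j <= a).
Proof.
have hK := KN D N; move=> hb hbK hj.
have [V2 C2] := @down_run (D - j) (b + j) (ltac:(lia)) (ltac:(lia))
   (fun m hm => @modnz b m hb (ltac:(lia))).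
have e : b + j + (D - j) = b + D by lia.
rewrite e in V2 C2.
have V1 : VP 0 (b + D) [:: b + D].
  by apply: VP_edge; [apply: edge_close | lia | lia | lia].
have m1 : map (modn^~D) (iota (b + j) (D - j)) = iota j (D - j).
  by rewrite mod_iota //; lia.
have hcol : pairmap colN 0 ((b + D) :: rev (iota (b + j) (D - j))) = D :: rev (iota j (D - j)).
  by rewrite /= C2 m1 col_close //; lia.
split.
- by apply: (VP_glue V1 V2) => v; rewrite !inE mem_rev mem_iota; lia.
- by apply/allP => v; rewrite !inE mem_rev mem_iota; lia.
- by rewrite hcol /= rev_uniq iota_uniq mem_rev mem_iota andbT; lia.
- by rewrite hcol; apply/allP => a; rewrite !inE mem_rev mem_iota; lia.
Qed.

Lemma same_up b i j : b %% D = 0 -> b + D <= K -> 0 < i -> i < j <= D ->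
  exists s, RP (b + i) (b + j) s.
Proof.
move=> hb hbK hi hj.
have [V1 C1] := @up_run (j - i) (b + i) (ltac:(lia)) (ltac:(lia))
   (fun m hm => @modnz b m hb (ltac:(lia))).
have e : b + i + (j - i) = b + j by lia.
rewrite e in V1; exists (iota (b + i).+1 (j - i)); split => //.
by rewrite C1 mod_iota ?iota_uniq //; lia.
Qed.

Lemma same_down b i j : b %% D = 0 -> b + D <= K -> 0 < j -> j < i <= D ->
  exists s, RP (b + i) (b + j) s.
Proof.
move=> hb hbK hi hj.
have [V1 C1] := @down_run (i - j) (b + j) (ltac:(lia)) (ltac:(lia))
   (fun m hm => @modnz b m hb (ltac:(lia))).
have e : b + j + (i - j) = b + i by lia.
rewrite e in V1 C1; exists (rev (iota (b + j) (i - j))); split => //.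
by rewrite C1 mod_iota ?rev_uniq ?iota_uniq //; lia.
Qed.

Lemma left_F x : K < x <= N ->
  ArmF x [:: 0] (fun v => (v == x) || (v == 0)) (fun a => a == x.-1 - K).
Proof.
move=> hx; split.
- by apply: VP_edge; [rewrite adj_sym; apply: edge_left | lia | lia | lia].
- by rewrite /= !eqxx orbT.
- by [].
- by rewrite /= col_sym col_left // eqxx.
Qed.

Lemma left_T y : K < y <= N ->
  ArmT y [:: y] (fun v => v == y) (fun a => a == y.-1 - K).
Proof.
move=> hy; split.
- by apply: VP_edge; [apply: edge_left | lia | lia | lia].
- by rewrite /= !eqxx.
- by [].
- by rewrite /= col_left // eqxx.
Qed.

Lemma hub_F : ArmF 0 [::] (fun v => v == 0) pred0.
Proof. by split => //; split. Qed.
Lemma hub_T : ArmT 0 [::] pred0 pred0.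
Proof. by split => //; split. Qed.

Lemma classify v : v <= N -> v = 0 \/
  (exists b i, [/\ b %% D = 0, b + D <= K, 0 < i <= D & v = b + i]) \/ K < v.
Proof.
move=> vN; case: (posnP v) => [->|v0]; first by left.
case: (leqP v K) => vK; last by right; right.
right; left; exists (v.-1 %/ D * D), (v.-1 %% D).+1.
have hm := ltn_pmod v.-1 (ltnW hD).
have hdiv := divn_eq v.-1 D.
have hq : v.-1 %/ D < kk D N.
  rewrite -(ltn_pmul2r (ltnW hD)) -/(KK D N); lia.
have hq2 : (v.-1 %/ D).+1 * D <= K by rewrite leq_pmul2r //; lia.
split; first by rewrite modnMl.
- by rewrite mulSn in hq2; lia.
- lia.
- lia.
Qed.

Lemma far b1 b2 : b1 %% D = 0 -> b2 %% D = 0 -> b1 < b2 -> b1 + D <= b2.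
Proof.
move=> h1 h2 h; have : D %| b2 - b1 by apply: dvdn_sub; apply/eqP.
have hp : 0 < b2 - b1 by lia.
move/(dvdn_leq hp); lia.
Qed.

Lemma connected x y : x <= N -> y <= N -> x != y -> exists s, RP x y s.
Proof.
have hK := KN D N.
move=> xN yN.
have hl : N - K < D.
  rewrite /KK /kk. have := ltn_pmod N (ltnW hD). rewrite {2}(divn_eq N D). lia.
case: (classify xN) => [x0|[[b1 [i [hb1 hb1K hi ->]]]|xK]];
case: (classify yN) => [y0|[[b2 [j [hb2 hb2K hj ->]]]|yK]] xy.
- by subst; lia.
- subst; apply: (combine hub_F (arm_up hb2 hb2K hj)) => v //=; lia.
- subst; apply: (combine hub_F (left_T (y:=y) (ltac:(lia)))) => v //=; lia.
- subst; apply: (combine (arm_back hb1 hb1K hi) hub_T) => v //=.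
- case: (ltngtP b1 b2) => hbb.
  + have := far hb1 hb2 hbb => hf.
    case: (leqP i j) => hij.
      by apply: (combine (arm_back hb1 hb1K hi) (arm_down hb2 hb2K hj)) => v /=; lia.
    by apply: (combine (arm_fwd hb1 hb1K hi) (arm_up hb2 hb2K hj)) => v /=; lia.
  + have := far hb2 hb1 hbb => hf.
    case: (leqP i j) => hij.
      by apply: (combine (arm_back hb1 hb1K hi) (arm_down hb2 hb2K hj)) => v /=; lia.
    by apply: (combine (arm_fwd hb1 hb1K hi) (arm_up hb2 hb2K hj)) => v /=; lia.
  + subst b2; case: (ltngtP i j) => hij.
    * apply: same_up => //; lia.
    * apply: same_down => //; lia.
    * by exfalso; move: xy hij; lia.
- case: (leqP i (y.-1 - K)) => hij.
    by apply: (combine (arm_back hb1 hb1K hi) (left_T (y:=y) (ltac:(lia)))) => v /=; lia.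
  by apply: (combine (arm_fwd hb1 hb1K hi) (left_T (y:=y) (ltac:(lia)))) => v /=; lia.
- subst; apply: (combine (left_F (x:=x) (ltac:(lia))) hub_T) => v //=.
- case: (ltnP (x.-1 - K) j) => hij.
    by apply: (combine (left_F (x:=x) (ltac:(lia))) (arm_down hb2 hb2K hj)) => v /=; lia.
  by apply: (combine (left_F (x:=x) (ltac:(lia))) (arm_up hb2 hb2K hj)) => v /=; lia.
- by apply: (combine (left_F (x:=x) (ltac:(lia))) (left_T (y:=y) (ltac:(lia)))) => v /=; lia.
Qed.
End Main.

Lemma map_pairmap (T U W : Type) (h : U -> W) (f : T -> T -> U) x s :
  map h (pairmap f x s) = pairmap (fun a b => h (f a b)) x s.
Proof. by elim: s x => //= y s IH x; rewrite IH. Qed.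

Lemma pairmap_map (T U W : Type) (g : T -> U) (f : U -> U -> W) x s :
  pairmap f (g x) (map g s) = pairmap (fun a b => f (g a) (g b)) x s.
Proof. by elim: s x => //= y s IH x; rewrite IH. Qed.

Lemma lift D N x y s : RP D N x y s ->
  rainbow_path (E D N) (@c D N) (inord x) (inord y) (map inord s).
Proof.
case=> [[p l u a] cu]; split.
- by rewrite path_map.
- by rewrite last_map l.
- rewrite -map_cons map_inj_in_uniq // => v w hv hw /(congr1 val).
  move/allP: a => a; rewrite /= !inordK //; [exact: a | exact: a].
- rewrite pairmap_map -(map_inj_uniq val_inj) !map_pairmap; exact: cu.
Qed.

Theorem proposition3 (n d : nat) :
  3 <= d -> d < n.+1 %/ 2 ->
  t n d <= n - 2 + (n + (d - 2)) %/ (d - 1).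
Proof.
case: n => [|N]; first by move=> _; rewrite divn_small //; case: d.
case: d => [|D] //; move=> hD3 hdn.
have hD : 1 < D by lia.
have hN : D.+1 < N by have := leq_div2r 2 (leqnn N.+2); rewrite -(leq_pmul2r (isT : 0 < 2)) in hdn *; have := divn_eq N.+2 2; have := ltn_pmod N.+2 (isT : 0 < 2); lia.
set E0 := E D N.
have Hrc : has_rc_graph N.+1 D.+1 #|E0|.
  rewrite /has_rc_graph; case: excluded_middle_informative => // nH; exfalso; apply: nH; exists E0; split => //.
  - move=> e; case/setUP => /imsetP [v vin ->]; rewrite cards2.
    + move: vin; rewrite inE => v0; case: eqP => // /(congr1 val).
      rewrite /= inordK; last by rewrite /predv; case: ifP => _; have := ltn_ord v; lia.
      move: v0; rewrite -(inj_eq val_inj) /= /predv; case: ifP => _; lia.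
    + case: eqP => // /(congr1 val).
      have hK := KN D N; have hv := ltn_ord v; rewrite /KK in hK.
      have hh : v.+1 * D <= kk D N * D by rewrite leq_pmul2r //; lia.
      rewrite /= inordK; last lia. rewrite mulSn in hh *; lia.
  - exists (@c D N) => u v uv.
    have [s hs] := @connected D N hD u v (ltn_ord u) (ltn_ord v) uv.
    exists (map inord s); rewrite -[u]inord_val -[v]inord_val; exact: lift hs.
have Hex : exists m, has_rc_graph N.+1 D.+1 m by exists #|E0|.
rewrite /t; case: excluded_middle_informative => [H|_]; last by [].
case: ex_minnP => m _ hmin; apply: leq_trans (hmin _ Hrc) _.
have h1 : #|E0| <= N + kk D N.
  apply: leq_trans (leq_card_setU _ _) _; apply: leq_add.
    apply: leq_trans (leq_imset_card _ _) _.
    have hc : #|[set v : 'I_N.+1 | v != ord0]| = N.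
      by rewrite cardsE (cardC1 (ord0 : 'I_N.+1)) card_ord.
    by rewrite hc.
  by apply: leq_trans (leq_imset_card _ _) _; rewrite card_ord.
have -> : N.+1 + (D.+1 - 2) = (1 * D + N) by lia.
have -> : D.+1 - 1 = D by lia.
rewrite divnMDl; last lia.
rewrite /kk in h1; lia.
Qed.
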